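(* Let $p$ be an odd prime, let $M,S$ be integers with $0\leq S<M$, and let $\zeta$ be a primitive $p^M$-th root of unity. Then for every integer $k$ with $(k,p)=1$ and $0\leq k<p^S$, $$\sum_{i=0}^{p^S-1}\zeta^{(1+kp^{M-S})^i}=0.$$ *)

(* Defs.v *)
From mathcomp Require Import all_boot all_order all_algebra all_field.

(* Main.v *)
Require Import Defs.
From mathcomp Require Import all_boot all_order all_algebra all_field.
From mathcomp Require Import ring zify.

Lemma L0 (x m : nat) : exists r, (1 + x) ^ m = 1 + m * x + 'C(m, 2) * x ^ 2 + x ^ 3 * r.
Proof.
elim: m => [|m [r IH]]; first by exists 0; rewrite expn0 bin0n /=; ring.
exists ('C(m, 2) + r + x * r).
rewrite expnS IH binS bin1. ring.
Qed.

Lemma L0b (x m : nat) : exists s, (1 + x) ^ m = 1 + m * x + x ^ 2 * s.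
Proof.
have [r ->] := L0 x m. exists ('C(m,2) + x * r). ring.
Qed.

Lemma L1 (p e k : nat) : prime p -> odd p -> 0 < e -> coprime k p ->
  forall t, exists u, coprime u p /\ (1 + k * p ^ e) ^ (p ^ t) = 1 + u * p ^ (e + t).
Proof.
move=> pp op e0 ck; elim=> [|t [u [cu IH]]]; first by exists k; rewrite addn0 expn0 expn1.
set f := e + t.
have [g fg] : exists g, f = g.+1 by exists f.-1; rewrite /f; lia.
have [r Er] := L0 (u * p ^ f) p.
have hp := odd_double_half p. rewrite op in hp.
set h := p./2 in hp.
have Cp : 'C(p, 2) = p * h.
  rewrite bin2 -hp /= -[h.*2]mul2n; rewrite [(1 + _) * _]mulnC -mulnA mul2n doubleK. ring.
exists (u + p * (h * u ^ 2 * p ^ g + p ^ (2 * g) * u ^ 3 * r)); split.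
  by rewrite -coprime_modl mulnC addnC modnMDl coprime_modl.
rewrite expnSr expnM IH. rewrite Er Cp addnS -/f fg.
rewrite (mulnC 2 g) expnM !expnS. ring.
Qed.

Lemma L2 (p e k S n : nat) : prime p -> odd p -> 0 < e -> coprime k p ->
  0 < n -> n < p ^ S -> ~~ (p ^ (e + S) %| (1 + k * p ^ e) ^ n - 1).
Proof.
move=> pp op e0 ck n0 nS.
have p1 : 1 < p by apply: prime_gt1.
have [m cm En] := pfactor_coprime pp n0.
set t := logn p n in En.
have m0 : 0 < m by move: n0; rewrite En; case: m {cm En}.
have tS : t < S.
  rewrite -(ltn_exp2l _ _ p1); apply: leq_ltn_trans nS; rewrite En leq_pmull //.
have [u [cu Eu]] := @L1 p e k pp op e0 ck t.
have [s Es] := L0b (u * p ^ (e + t)) m.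
rewrite En (mulnC m) expnM Eu Es -addnA addKn.
apply/negP => H.
have H2 : p ^ (e + t).+1 %| m * (u * p ^ (e + t)) + (u * p ^ (e + t)) ^ 2 * s.
  apply: dvdn_trans H; apply: dvdn_exp2l; lia.
rewrite dvdn_addl in H2; last first.
  rewrite expnMn -expnM; apply: dvdn_mulr; apply: dvdn_mull; apply: dvdn_exp2l.
  lia.
rewrite expnSr mulnA [_ * p ^ _]mulnC dvdn_pmul2l ?expn_gt0 ?prime_gt0 // in H2.
rewrite Euclid_dvdM // in H2.
move: cm cu; rewrite prime_coprime // coprime_sym prime_coprime //.
by case/orP: H2 => ->.
Qed.

Lemma L3 (p e k S i j : nat) : prime p -> odd p -> 0 < e -> coprime k p ->
  i < p ^ S -> j < p ^ S ->
  (1 + k * p ^ e) ^ i = (1 + k * p ^ e) ^ j %[mod p ^ (e + S)] -> i = j.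
Proof.
move=> pp op e0 ck.
wlog ij : i j / i <= j.
  move=> W iS jS E; case: (leqP i j) => h; first exact: W.
  by symmetry; apply: W => //; apply: ltnW.
move=> iS jS E.
set a := 1 + k * p ^ e in E.
have ca : coprime (p ^ (e + S)) (a ^ i).
  apply: coprimeXl; apply: coprimeXr; rewrite prime_coprime // /a dvdn_addl.
    by rewrite dvdn1; apply/eqP => p1; move: pp; rewrite p1.
  by apply: dvdn_mull; apply: dvdn_exp.
have a0 : 0 < a ^ (j - i) by rewrite expn_gt0 /a addnC addn1.
have H : p ^ (e + S) %| a ^ (j - i) - 1.
  move: E; rewrite -{1}(subnKC ij) (expnD a) => /esym.
  move/eqP; rewrite eqn_mod_dvd; last by rewrite leq_pmulr.
  by rewrite -{2}(muln1 (a ^ i)) -mulnBr Gauss_dvdr.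
apply/eqP; rewrite eqn_leq ij /=; rewrite leqNgt; apply/negP => ltij.
have lt : j - i < p ^ S by apply: leq_ltn_trans jS; apply: leq_subr.
have := @L2 p e k S (j - i) pp op e0 ck.
by rewrite subn_gt0 ltij H lt => /(_ isT isT).
Qed.

Fixpoint cseq (a k i : nat) : nat :=
  if i is i'.+1 then a * cseq a k i' + k else 0.

Lemma cseqE (q k i : nat) : (1 + k * q) ^ i = 1 + q * cseq (1 + k * q) k i.
Proof. elim: i => [|i IH] /=; first by rewrite expn0; ring. rewrite expnS IH; ring. Qed.

Import GRing.Theory.
Local Open Scope ring_scope.

Theorem lemma5p1 (p M S : nat) (zeta : algC) :
  prime p -> odd p -> (S < M)%N ->
  (p ^ M)%N.-primitive_root zeta ->
  forall k : nat, coprime k p -> (k < p ^ S)%N ->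
  \sum_(0 <= i < p ^ S) zeta ^+ ((1 + k * p ^ (M - S)) ^ i)%N = 0.
Proof.
move=> pp op SM prim k ck kS.
set e := (M - S)%N.
have e0 : (0 < e)%N by rewrite /e subn_gt0.
have EM : M = (e + S)%N by rewrite /e subnK // ltnW.
have p1 : (1 < p)%N by apply: prime_gt1.
have S0 : (0 < S)%N.
  case: S kS {EM e e0 SM} => // ; rewrite expn0 ltnS leqn0 => /eqP k0.
  by move: ck; rewrite k0 /coprime gcd0n => /eqP p1'; move: p1; rewrite p1'.
set N := (p ^ S)%N.
have N1 : (1 < N)%N by rewrite -(expn0 p) ltn_exp2l.
have N0 : (0 < N)%N by apply: ltnW.
set q := (p ^ e)%N.
have qN : (p ^ M %/ N)%N = q by rewrite EM expnD mulnK // expn_gt0 prime_gt0.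
have pw : N.-primitive_root (zeta ^+ q).
  rewrite -qN; apply: dvdn_prim_root => //; by rewrite EM expnD; apply: dvdn_mull.
set w := zeta ^+ q.
set a := (1 + k * q)%N.
set h := fun i : 'I_N => Ordinal (ltn_pmod (cseq a k i) N0).
have hinj : injective h.
  move=> i j /(congr1 val) /= E; apply: val_inj => /=.
  apply: (@L3 p e k S) => //.
  rewrite !cseqE -/a -/q -[LHS]modnDmr -[RHS]modnDmr; congr (_ %% _)%N; congr (_ + _)%N.
  by rewrite expnD -/q -/N -!muln_modr E.
rewrite big_mkord.
transitivity (\sum_(i < N) zeta * w ^+ h i).
  apply: eq_bigr => i _ /=.
  by rewrite cseqE exprD expr1 exprM prim_expr_mod.
rewrite -mulr_sumr.
have -> : \sum_(i < N) w ^+ h i = \sum_(i < N) w ^+ i.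
  by rewrite [RHS](reindex_inj hinj).
have : (w - 1) * \sum_(i < N) w ^+ i = 0 by rewrite -subrX1 prim_expr_order // subrr.
move/eqP; rewrite mulf_eq0 subr_eq0 => /orP [/eqP w1|/eqP ->]; last by rewrite mulr0.
by have := prim_order_dvd pw 1; rewrite expr1 -/w w1 eqxx dvdn1 => /eqP N1'; move: N1; rewrite N1'.
Qed.
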